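(* A countable (finite or infinite) graph is $\mathcal{C}$-$\mathrm{HI}$ if and only if it is a disjoint union of copies of a single complete graph.
   Context: Graphs are simple; subgraphs are induced. A homomorphism of graphs maps edges to edges; an automorphism is a bijective endomorphism whose inverse is a homomorphism. A graph $G$ is $\mathcal{C}$-$\mathrm{HI}$ if every homomorphism from a finite connected induced subgraph of $G$ into $G$ extends to an automorphism of $G$. *)

(* Defs.v *)
From mathcomp Require Import ssreflect ssrfun ssrbool eqtype ssrnat seq path choice.
Set Implicit Arguments. Unset Strict Implicit. Unset Printing Implicit Defensive.

Definition simple_graph (T : Type) (e : rel T) : Prop :=
  symmetric e /\ irreflexive e.

Definition induced_connected (T : eqType) (e : rel T) (S : seq T) : Prop :=
  forall x y, x \in S -> y \in S ->
    exists p : seq T, [&& path e x p, last x p == y & all (mem S) p].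

Definition hom_on (T : eqType) (e : rel T) (S : seq T) (f : T -> T) : Prop :=
  forall x y, x \in S -> y \in S -> e x y -> e (f x) (f y).

Definition automorphism (T : Type) (e : rel T) (g : T -> T) : Prop :=
  exists2 h : T -> T, cancel g h /\ cancel h g &
    (forall x y, e x y -> e (g x) (g y)) /\ (forall x y, e x y -> e (h x) (h y)).

Definition C_HI (T : eqType) (e : rel T) : Prop :=
  forall (S : seq T) (f : T -> T), induced_connected e S -> hom_on e S f ->
    exists g, automorphism e g /\ {in S, forall x, g x = f x}.

(* G is isomorphic to a disjoint union of copies (indexed by I) of the
   complete graph on K: vertex x corresponds to (copy, position) phi x and
   x ~ y iff they lie in the same copy and are distinct. *)
Definition disjoint_union_of_complete (T : Type) (e : rel T) : Prop :=
  exists (I K : Type) (phi : T -> I * K), bijective phi /\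
    forall x y, e x y <-> ((phi x).1 = (phi y).1 /\ (phi x).2 <> (phi y).2).

(* Main.v *)
Require Import Defs.
From mathcomp Require Import ssreflect ssrfun ssrbool eqtype ssrnat seq path choice.
From Stdlib Require Import Classical ClassicalEpsilon.

Definition swap {K : Type} (a b x : K) : K :=
  if excluded_middle_informative (x = a) then b
  else if excluded_middle_informative (x = b) then a else x.

Lemma swap_l (K : Type) (a b : K) : swap a b a = b.
Proof.
rewrite /swap; destruct (excluded_middle_informative (a = a)) as [h|h]; first by [].
by case: h.
Qed.

Lemma swap_other (K : Type) (a b x : K) : x <> a -> x <> b -> swap a b x = x.
Proof.
move=> xa xb; rewrite /swap.
destruct (excluded_middle_informative (x = a)) as [h|h]; first by case: (xa h).
destruct (excluded_middle_informative (x = b)) as [h'|h']; first by case: (xb h').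
by [].
Qed.

Lemma swap_r (K : Type) (a b : K) : swap a b b = a.
Proof.
rewrite /swap; destruct (excluded_middle_informative (b = a)) as [h|h]; first by [].
destruct (excluded_middle_informative (b = b)) as [h'|h']; first by [].
by case: h'.
Qed.

Lemma swapK (K : Type) (a b : K) : involutive (swap a b).
Proof.
move=> x.
case: (classic (x = a)) => [->|xa]; first by rewrite swap_l swap_r.
case: (classic (x = b)) => [->|xb]; first by rewrite swap_r swap_l.
by rewrite !swap_other.
Qed.

Lemma perm_ext (T : eqType) (K : Type) (S : seq T) (al be : T -> K) :
  (forall u v, u \in S -> v \in S -> (al u = al v <-> be u = be v)) ->
  exists p q : K -> K, [/\ cancel p q, cancel q p & {in S, forall u, p (al u) = be u}].
Proof.
elim: S => [|u S IH] H.
  by exists id, id; split.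
have H' : forall a b, a \in S -> b \in S -> (al a = al b <-> be a = be b).
  by move=> a b Ha Hb; apply: H; rewrite inE ?Ha ?Hb orbT.
have [p [q [pK qK pS]]] := IH H'.
have Hu : u \in u :: S by rewrite inE eqxx.
case: (classic (exists2 v, v \in S & al v = al u)) => [[v vS Ev]|Nv].
  exists p, q; split => // w; rewrite inE => /orP [/eqP -> | wS]; last exact: pS.
  have Hv : v \in u :: S by rewrite inE vS orbT.
  rewrite -Ev pS //; exact: (proj1 (H v u Hv Hu) Ev).
pose c := p (al u).
exists (fun x => swap c (be u) (p x)), (fun x => q (swap c (be u) x)); split.
- by move=> x /=; rewrite swapK pK.
- by move=> x /=; rewrite qK swapK.
- move=> w; rewrite inE => /orP [/eqP -> | wS] /=; first by rewrite /c swap_l.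
  have Hw : w \in u :: S by rewrite inE wS orbT.
  rewrite pS // swap_other //.
  + move=> E; apply: Nv; exists w => //; apply: (can_inj pK).
    by rewrite pS.
  + move=> E; apply: Nv; exists w => //; exact: (proj2 (H w u Hw Hu) E).
Qed.

Lemma path_inv (T : eqType) (e : rel T) (S : seq T) (Q : T -> Prop) :
  (forall a b, a \in S -> b \in S -> e a b -> Q a -> Q b) ->
  forall x p, x \in S -> path e x p -> all (mem S) p -> Q x -> Q (last x p).
Proof.
move=> HQ x p; elim: p x => [|y p IH] x //= xS /andP [exy py] /andP [yS pS] Qx.
exact: (IH y yS py pS (HQ x y xS yS exy Qx)).
Qed.

Lemma star_conn (T : eqType) (e : rel T) (S : seq T) y : symmetric e -> y \in S ->
  (forall a, a \in S -> a != y -> e a y) -> induced_connected e S.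
Proof.
move=> esym yS Hy a b aS bS.
case: (eqVneq a y) => [->|ay]; case: (eqVneq b y) => [->|by_].
- by exists [::]; rewrite /= eqxx.
- by exists [:: b]; rewrite /= esym Hy // eqxx bS.
- by exists [:: y]; rewrite /= Hy // eqxx yS.
- by exists [:: y; b]; rewrite /= Hy // esym Hy // eqxx yS bS.
Qed.

Lemma backward (T : eqType) (e : rel T) :
  simple_graph e -> disjoint_union_of_complete e -> C_HI e.
Proof.
move=> [esym eirr] [I [K [phi [[phi' phiK phiK'] He]]]].
move=> S0 f Sc fh.
case: S0 Sc fh => [|s S'] Sc fh.
  by exists id; split => //; exists id => //.
set S := s :: S' in Sc fh *.
have sS : s \in S by rewrite inE eqxx.
pose i0 := (phi s).1. pose j0 := (phi (f s)).1.
have HS : forall u, u \in S -> (phi u).1 = i0 /\ (phi (f u)).1 = j0.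
  move=> u uS; have [p /and3P [pp /eqP <- pS]] := Sc s u sS uS.
  apply: (@path_inv _ e S (fun x => (phi x).1 = i0 /\ (phi (f x)).1 = j0)) => //.
  move=> a b aS bS eab [Ha Hfa]; split.
    by have [E _] := proj1 (He a b) eab; rewrite -E.
  by have [E _] := proj1 (He (f a) (f b)) (fh a b aS bS eab); rewrite -E.
have Hab : forall u v, u \in S -> v \in S ->
    ((phi u).2 = (phi v).2 <-> (phi (f u)).2 = (phi (f v)).2).
  move=> u v uS vS; have [Hu Hfu] := HS u uS; have [Hv Hfv] := HS v vS; split => E.
    have -> : u = v; last by [].
    rewrite -[u]phiK -[v]phiK; congr phi'.
    by apply: injective_projections => //; rewrite Hu Hv.
  apply: NNPP => N.
  have euv : e u v by apply/He; split => //; rewrite Hu Hv.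
  by have [_ ] := proj1 (He _ _) (fh u v uS vS euv).
have [p [q [pK qK pS]]] := @perm_ext T K S (fun x => (phi x).2) (fun x => (phi (f x)).2) Hab.
pose tau := swap i0 j0.
exists (fun x => phi' (tau (phi x).1, p (phi x).2)); split.
  exists (fun x => phi' (tau (phi x).1, q (phi x).2)); split.
  - by move=> x; rewrite phiK' /= /tau swapK pK -surjective_pairing phiK.
  - by move=> x; rewrite phiK' /= /tau swapK qK -surjective_pairing phiK.
  - move=> x y exy; have [E1 E2] := proj1 (He x y) exy; apply (proj2 (He _ _)); rewrite !phiK' /=; split; first by rewrite E1.
    by move=> /(can_inj pK).
  - move=> x y exy; have [E1 E2] := proj1 (He x y) exy; apply (proj2 (He _ _)); rewrite !phiK' /=; split; first by rewrite E1.
    by move=> /(can_inj qK).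
move=> u uS; have [Hu Hfu] := HS u uS.
by rewrite Hu /tau swap_l -Hfu pS // -surjective_pairing phiK.
Qed.

Lemma forward (T : countType) (e : rel T) :
  simple_graph e -> C_HI e -> disjoint_union_of_complete e.
Proof.
move=> [esym eirr] H.
have noP3 : forall x y z, e x y -> e y z -> x != z -> e x z.
  move=> x y z exy eyz xz; apply: NNPP => nxz.
  have yz : y != z by apply/eqP => yz; move: eyz; rewrite yz eirr.
  pose S := [:: x; y; z].
  pose f := fun v => if v == z then x else v.
  have Sc : induced_connected e S.
    apply: (@star_conn _ e S y esym); first by rewrite !inE eqxx orbT.
    move=> a; rewrite !inE => /or3P [] /eqP -> //; first by rewrite eqxx.
    by move=> _; rewrite esym.
  have fh : hom_on e S f.
    move=> u v; rewrite !inE => /or3P [] /eqP -> /or3P [] /eqP -> E;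
      rewrite /f ?eqxx ?(negbTE xz) ?(negbTE yz) ?eirr //; try by rewrite eirr in E.
    all: try by rewrite esym.
    + by exfalso; apply: nxz; rewrite esym.

  have [g [[h [gK _] _] gf]] := H S f Sc fh.
  have : g x = g z.
    by rewrite !gf ?inE ?eqxx ?orbT // /f eqxx (negbTE xz).
  by move/(can_inj gK)/eqP; rewrite (negbTE xz).
pose R x y := (x == y) || e x y.
have Rrefl : forall x, R x x by move=> x; rewrite /R eqxx.
have Rsym : forall x y, R x y -> R y x by move=> x y; rewrite /R eq_sym esym.
have Rtr : forall x y z, R x y -> R y z -> R x z.
  move=> x y z; rewrite /R => /orP [/eqP -> //|exy] /orP [/eqP <-|eyz].
    by rewrite exy orbT.
  case: (eqVneq x z) => [//|xz] /=; exact: (noP3 x y z).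
have Rhom : forall g : T -> T, injective g -> (forall x y, e x y -> e (g x) (g y)) ->
    forall x y, R x y -> R (g x) (g y).
  move=> g ginj ge x y; rewrite /R => /orP [/eqP -> | exy]; first by rewrite eqxx.
  by rewrite ge ?orbT.
pose rep x := choose (R x) x.
have Rrep : forall x, R x (rep x) by move=> x; exact: chooseP.
have rep_eq : forall x y, R x y -> rep x = rep y.
  move=> x y Rxy; rewrite /rep.
  have E : R x =1 R y.
    move=> z; apply/idP/idP => Hz; first exact: Rtr (Rsym _ _ Rxy) Hz.
    exact: Rtr Rxy Hz.
  rewrite (eq_choose E); apply: choose_id; [exact: Rsym | exact: Rrefl].
have Rrep_eq : forall x y, R x y <-> rep x = rep y.
  move=> x y; split; first exact: rep_eq.
  move=> E; apply: Rtr (Rrep x) _; rewrite E; exact: Rsym.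
case: (classic (exists x0 : T, True)) => [[x0 _]|NT]; last first.
  exists T, T, (fun x => (x, x)); split.
    by exists fst => // [[a b]]; exfalso; apply: NT; exists a.
  by move=> x y; exfalso; apply: NT; exists x.
have Hg : forall r, exists gh : (T -> T) * (T -> T),
    [/\ cancel gh.1 gh.2, cancel gh.2 gh.1, (forall x y, e x y -> e (gh.1 x) (gh.1 y)),
        (forall x y, e x y -> e (gh.2 x) (gh.2 y)) & gh.1 x0 = r].
  move=> r.
  have Sc : induced_connected e [:: x0].
    move=> a b; rewrite !inE => /eqP -> /eqP ->; exists [::]; by rewrite /= eqxx.
  have fh : hom_on e [:: x0] (fun _ => r).
    by move=> a b; rewrite !inE => /eqP -> /eqP ->; rewrite eirr.
  have [g [[h [gK hK] [ge he]] gf]] := H _ _ Sc fh.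
  exists (g, h); split => //=; apply: gf; by rewrite inE.
pose GH r := proj1_sig (constructive_indefinite_description _ (Hg r)).
have GHP := fun r => proj2_sig (constructive_indefinite_description _ (Hg r)).
pose g r := (GH r).1. pose h r := (GH r).2.
have gK : forall r, cancel (g r) (h r) by move=> r; case: (GHP r).
have hK : forall r, cancel (h r) (g r) by move=> r; case: (GHP r).
have ge : forall r x y, e x y -> e (g r x) (g r y) by move=> r; case: (GHP r).
have he : forall r x y, e x y -> e (h r x) (h r y) by move=> r; case: (GHP r).
have gx0 : forall r, g r x0 = r by move=> r; case: (GHP r).
have hr : forall r, h r r = x0 by move=> r; have := gK r x0; rewrite gx0.
have repK : forall x, rep (rep x) = rep x.
  by move=> x; symmetry; apply: rep_eq.
have Kin : forall x, R x0 (h (rep x) x).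
  move=> x; rewrite -(hr (rep x)); apply: Rhom.
  - exact: can_inj (hK _).
  - exact: he.
  - exact: Rsym.
exists {r : T | rep r == r}, {k : T | R x0 k}.
exists (fun x => (exist _ (rep x) (introT eqP (repK x)), exist _ (h (rep x) x) (Kin x))).
split.
  exists (fun ik => g (val ik.1) (val ik.2)).
    by move=> x /=; rewrite hK.
  move=> [[r rr] [k Rk]] /=.
  have E : rep (g r k) = r.
    rewrite -{2}(eqP rr); symmetry; apply: rep_eq.
    rewrite -{1}(gx0 r); apply: Rhom; [exact: can_inj (gK r) | exact: ge | exact: Rk].
  apply: injective_projections; apply: val_inj => //=.
  by rewrite E gK.
move=> x y; split => [exy | [E1 E2]].
  have Rxy : R x y by rewrite /R exy orbT.
  have Er := rep_eq _ _ Rxy.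
  split; first by apply: val_inj; rewrite /= Er.
  move=> /(congr1 val) /= Eh.
  have xy : x = y.
    by apply: (can_inj (hK (rep x))); rewrite Eh Er.
  by move: exy; rewrite xy eirr.
have Er : rep x = rep y by move: E1 => /(congr1 val).
have : R x y by apply/Rrep_eq.
rewrite /R => /orP [/eqP xy|//]; exfalso; apply: E2; by rewrite xy.
Qed.

Theorem proposition4p1 (T : countType) (e : rel T) :
  simple_graph e -> (C_HI e <-> disjoint_union_of_complete e).
Proof.
move=> sg; split; [exact: forward | exact: backward].
Qed.
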